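(* Let $T$ be a finite rooted tree with root $\rho$, arc set $A_T$ (arcs directed away from the root) and leaf set $X$, with a non-negative length $\lambda_a$ on each arc $a\in A_T$. Consider a trait-dependent field of bullets (t-FOB) model on $T$, defined as follows. For $j=1,\dots,k$, $\xi_j$ is a two-state Markov process on $T$ with state space $\{0,1\}$, strictly positive root probabilities $\pi^{(j)}_0,\pi^{(j)}_1$, and transition matrices $P^{(j)}(r,s)$ with $\det P^{(j)}(r,s)\ge 0$ for all arcs $(r,s)$; these $k$ processes are independent, and $\boldsymbol{\xi}=(\xi_1,\dots,\xi_k)$ assigns a state $\boldsymbol{\xi}(x)\in\{0,1\}^k$ to each leaf $x$. For each species $x\in X$ and each $\mathbf{i}\in\{0,1\}^k$ a number $p_x^{\mathbf{i}}\in[0,1]$ is given, such that $p_x^{\mathbf{i}}\le p_x^{\mathbf{l}}$ whenever $l_j\le i_j$ for all $j=1,\dots,k$. Conditional on the leaf states, the species go extinct independently, species $x$ in state $\mathbf{i}$ going extinct with probability $p_x^{\mathbf{i}}$. The associated generalized field of bullets (g-FOB) model is the model in which each species $x\in X$ goes extinct independently of the others with probability $p_x=\sum_{\mathbf{i}\in\{0,1\}^k}p_x^{\mathbf{i}}\,\mathbb{P}(\boldsymbol{\xi}(x)=\mathbf{i})$ (the same marginal extinction probability as under the t-FOB model). Then the expected future phylogenetic diversity under the t-FOB model is less than or equal to the expected future phylogenetic diversity under the associated g-FOB model.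
   Context: For $Y\subseteq X$, the phylogenetic diversity $\varphi_Y$ is the sum of the lengths of the arcs of the minimal subtree of $T$ connecting the root and the leaves in $Y$. Under an extinction model, the future phylogenetic diversity is the random variable $\varphi=\varphi_S$, where $S$ is the (random) set of species in $X$ that are not extinct. Equivalently, $\mathbb{E}[\varphi]=\sum_{a=(u,v)\in A_T}\lambda_a\bigl(1-\mathbb{P}(\text{all leaves in }C_v\text{ are extinct})\bigr)$, where $C_v$ is the set of leaves separated from the root by $v$ ($C_v=\{v\}$ if $v$ is a leaf). Markov processes on trees: $\xi(\rho)=i$ with probability $\pi_i$, and the $(i,l)$ entry of $P(r,s)$ is the conditional probability that $\xi(s)=l$ given $\xi(r)=i$, with the Markov property along the tree. *)

(* Defs.v *)
From HB Require Import structures.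
From mathcomp Require Import all_boot all_order all_algebra.
Set Implicit Arguments. Unset Strict Implicit. Unset Printing Implicit Defensive.
Import Order.TTheory GRing.Theory Num.Theory.
Local Open Scope ring_scope.

(* A finite rooted tree on the vertex type V is given by a root and a parent
   map; arcs are (parent v, v) for v != root, directed away from the root. *)
Definition is_rooted_tree (V : finType) (root : V) (parent : V -> V) : Prop :=
  parent root = root /\ forall v : V, exists n : nat, iter n parent v = root.

(* u is an ancestor of v or u = v (u lies on the path from the root to v). *)
Definition anc (V : finType) (parent : V -> V) (u v : V) : bool :=
  [exists n : 'I_#|V|, iter n parent v == u].

Definition is_leaf (V : finType) (root : V) (parent : V -> V) (x : V) : bool :=
  [forall v : V, (v != root) ==> (parent v != x)].

Definition leaves (V : finType) (root : V) (parent : V -> V) : {set V} :=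
  [set x | is_leaf root parent x].

(* phylogenetic diversity phi_Y: sum of lengths of arcs (parent v, v) of the
   minimal subtree connecting the root and the leaves in Y, i.e. the arcs
   whose head v is an ancestor-or-equal of some leaf of Y. *)
Definition PD (R : numDomainType) (V : finType) (root : V) (parent : V -> V)
  (lambda : V -> R) (Y : {set V}) : R :=
  \sum_(v : V | v != root) (if [exists x in Y, anc parent v x] then lambda v else 0).

(* Joint law of k independent two-state Markov processes on the tree:
   a configuration xi assigns to each process j and vertex v a state in 'I_2. *)
Definition config_prob (R : numDomainType) (V : finType) (root : V)
  (parent : V -> V) (k : nat) (pi : 'I_k -> 'I_2 -> R)
  (P : 'I_k -> V -> 'M[R]_2) (xi : {ffun 'I_k -> {ffun V -> 'I_2}}) : R :=
  \prod_(j < k) (pi j (xi j root) *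
     \prod_(v : V | v != root) P j v (xi j (parent v)) (xi j v)).

Definition state_at (V : finType) (k : nat)
  (xi : {ffun 'I_k -> {ffun V -> 'I_2}}) (x : V) : {ffun 'I_k -> 'I_2} :=
  [ffun j => xi j x].

(* probability that exactly the leaves in S survive, given extinction
   probabilities q x for the leaves x (independent extinctions) *)
Definition surv_prob (R : numDomainType) (V : finType) (X : {set V})
  (q : V -> R) (S : {set V}) : R :=
  \prod_(x in X) (if x \in S then 1 - q x else q x).

Definition expPD_tFOB (R : numDomainType) (V : finType) (root : V)
  (parent : V -> V) (lambda : V -> R) (k : nat) (pi : 'I_k -> 'I_2 -> R)
  (P : 'I_k -> V -> 'M[R]_2) (p : V -> {ffun 'I_k -> 'I_2} -> R) : R :=
  \sum_(xi : {ffun 'I_k -> {ffun V -> 'I_2}})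
    config_prob root parent pi P xi *
    \sum_(S : {set V} | S \subset leaves root parent)
      surv_prob (leaves root parent) (fun x => p x (state_at xi x)) S
      * PD root parent lambda S.

Definition leaf_state_prob (R : numDomainType) (V : finType) (root : V)
  (parent : V -> V) (k : nat) (pi : 'I_k -> 'I_2 -> R)
  (P : 'I_k -> V -> 'M[R]_2) (x : V) (i : {ffun 'I_k -> 'I_2}) : R :=
  \sum_(xi : {ffun 'I_k -> {ffun V -> 'I_2}} | state_at xi x == i)
    config_prob root parent pi P xi.

Definition gFOB_prob (R : numDomainType) (V : finType) (root : V)
  (parent : V -> V) (k : nat) (pi : 'I_k -> 'I_2 -> R)
  (P : 'I_k -> V -> 'M[R]_2) (p : V -> {ffun 'I_k -> 'I_2} -> R) (x : V) : R :=
  \sum_(i : {ffun 'I_k -> 'I_2}) p x i * leaf_state_prob root parent pi P x i.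

Definition expPD_gFOB (R : numDomainType) (V : finType) (root : V)
  (parent : V -> V) (lambda : V -> R) (k : nat) (pi : 'I_k -> 'I_2 -> R)
  (P : 'I_k -> V -> 'M[R]_2) (p : V -> {ffun 'I_k -> 'I_2} -> R) : R :=
  \sum_(S : {set V} | S \subset leaves root parent)
    surv_prob (leaves root parent) (gFOB_prob root parent pi P p) S
    * PD root parent lambda S.

(* Main.v *)
Require Import Defs.
From HB Require Import structures.
From mathcomp Require Import all_boot all_order all_algebra.
From mathcomp Require Import ring lra.
Set Implicit Arguments. Unset Strict Implicit. Unset Printing Implicit Defensive.
Import Order.TTheory GRing.Theory Num.Theory.
Local Open Scope ring_scope.

Section Gen.
Variable R : realFieldType.

Lemma sum_subset_split (T : finType) (D : {set T}) i (F : {set T} -> R) :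
  i \in D ->
  \sum_(A : {set T} | A \subset D) F A = \sum_(A : {set T} | A \subset D :\ i) (F A + F (i |: A)).
Proof.
move=> iD; rewrite big_split /= (bigID (fun A : {set T} => i \in A)) /= addrC.
congr (_ + _).
  by apply: eq_bigl => A; rewrite subsetD1.
rewrite (reindex_onto (fun A => i |: A) (fun A => A :\ i)) /=.
  apply: eq_bigl => A; rewrite subsetD1 subUset sub1set iD setU11 /= andbT.
  case iA: (i \in A); last by rewrite setU1K ?iA ?eqxx ?andbT.
  rewrite /= andbF; apply/negbTE; apply/negP => /andP [_ /eqP E].
  by move: iA; rewrite -E setD11.
by move=> A /andP [_ iA]; rewrite setD1K.
Qed.

Lemma one_dim (a0 a1 b0 b1 c0 c1 d0 d1 : R) :
  0 <= a0 -> 0 <= a1 -> 0 <= b0 -> 0 <= b1 ->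
  0 <= c0 -> 0 <= c1 -> 0 <= d0 -> 0 <= d1 ->
  a0 * b0 <= c0 * d0 -> a0 * b1 <= c1 * d0 -> a1 * b0 <= c1 * d0 ->
  a1 * b1 <= c1 * d1 ->
  (a0 + a1) * (b0 + b1) <= (c0 + c1) * (d0 + d1).
Proof.
move=> ha0 ha1 hb0 hb1 hc0 hc1 hd0 hd1 h00 h01 h10 h11.
set x := a0 * b1; set y := a1 * b0; set u := c1 * d0; set w := c0 * d1.
have hx : 0 <= x by rewrite mulr_ge0.
have hy : 0 <= y by rewrite mulr_ge0.
have hw : 0 <= w by rewrite mulr_ge0.
have hxy : x * y <= u * w.
  have -> : x * y = (a0 * b0) * (a1 * b1) by rewrite /x /y; ring.
  have -> : u * w = (c0 * d0) * (c1 * d1) by rewrite /u /w; ring.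
  apply: ler_pM => //; by rewrite mulr_ge0.
have key : x + y <= u + w.
  have [u0|upos] := eqVneq u 0.
    have x0 : x = 0 by apply/le_anti; rewrite hx andbT -u0.
    have y0 : y = 0 by apply/le_anti; rewrite hy andbT -u0.
    by rewrite x0 y0 u0 !add0r.
  have up : 0 < u by rewrite lt_def upos mulr_ge0.
  have h1 : 0 <= (u - x) * (u - y) by apply: mulr_ge0; rewrite subr_ge0.
  have e : u * (x + y) = u * u + x * y - (u - x) * (u - y) by ring.
  have e2 : u * (u + w) = u * u + u * w by ring.
  have : u * (x + y) <= u * (u + w).
    rewrite e e2 lerBlDr; apply: (le_trans (y := u * u + u * w)).
      by rewrite lerD2l.
    by rewrite lerDl.
  by rewrite ler_pM2l.
have -> : (a0 + a1) * (b0 + b1) = a0 * b0 + a1 * b1 + (x + y) by rewrite /x /y; ring.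
have -> : (c0 + c1) * (d0 + d1) = c0 * d0 + c1 * d1 + (u + w) by rewrite /u /w; ring.
by apply: lerD => //; apply: lerD.
Qed.

Lemma setIU1_notin (T : finType) (A B : {set T}) i :
  i \notin A -> A :&: (i |: B) = A :&: B.
Proof.
move=> iA; apply/setP => x; rewrite !inE.
by case: (eqVneq x i) => [->|] //=; rewrite (negbTE iA).
Qed.

Lemma four_fun (T : finType) n : forall (D : {set T}), #|D| = n ->
  forall a b c d : {set T} -> R,
  (forall A : {set T}, 0 <= a A) -> (forall A, 0 <= b A) ->
  (forall A, 0 <= c A) -> (forall A, 0 <= d A) ->
  (forall A B : {set T}, A \subset D -> B \subset D ->
     a A * b B <= c (A :|: B) * d (A :&: B)) ->
  (\sum_(A : {set T} | A \subset D) a A) * (\sum_(A : {set T} | A \subset D) b A)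
  <= (\sum_(A : {set T} | A \subset D) c A) * (\sum_(A : {set T} | A \subset D) d A).
Proof.
elim: n => [|n IH] D cD a b c d ha hb hc hd H.
  move/eqP: cD; rewrite cards_eq0 => /eqP ->.
  rewrite !(big_pred1 set0); first last.
  1-4: by move=> A; rewrite subset0.
  by have := H set0 set0 (sub0set _) (sub0set _); rewrite setU0 set0I.
have : (0 < #|D|)%N by rewrite cD.
rewrite card_gt0 => /set0Pn [i iD].
rewrite !(sum_subset_split _ iD).
apply: (IH (D :\ i)).
- by move: cD; rewrite (cardsD1 i D) iD add1n => -[].
- by move=> A; rewrite addr_ge0.
- by move=> A; rewrite addr_ge0.
- by move=> A; rewrite addr_ge0.
- by move=> A; rewrite addr_ge0.
move=> A B; rewrite !subsetD1 => /andP [AD iA] /andP [BD iB].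
have iAD : i |: A \subset D by rewrite subUset sub1set iD.
have iBD : i |: B \subset D by rewrite subUset sub1set iD.
have iAB : i \notin A :&: B by rewrite inE (negbTE iA).
apply: one_dim => //.
- exact: H.
- have := H _ _ AD iBD.
  by rewrite setIU1_notin // setUCA.
- have := H _ _ iAD BD.
  by rewrite setIC setIU1_notin // setIC setUA.
- have := H _ _ iAD iBD.
  have -> : (i |: A) :|: (i |: B) = i |: (A :|: B).
    by apply/setP => x; rewrite !inE; case: (x == i).
  by rewrite -setUIr.
Qed.
End Gen.

Lemma fkg_set (R : realFieldType) (T : finType) (mu f g : {set T} -> R) :
  (forall A, 0 <= mu A) -> (forall A, 0 <= f A) -> (forall A, 0 <= g A) ->
  (forall A B : {set T}, A \subset B -> f B <= f A) ->
  (forall A B : {set T}, A \subset B -> g B <= g A) ->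
  (forall A B : {set T}, mu A * mu B <= mu (A :|: B) * mu (A :&: B)) ->
  (\sum_A mu A * f A) * (\sum_A mu A * g A)
  <= (\sum_A mu A) * (\sum_A mu A * f A * g A).
Proof.
move=> hm hf hg df dg hl.
have E : forall F : {set T} -> R, \sum_A F A = \sum_(A : {set T} | A \subset setT) F A.
  by move=> F; apply: eq_bigl => A; rewrite subsetT.
rewrite !E; apply: (four_fun (erefl _)).
- by move=> A; rewrite mulr_ge0.
- by move=> A; rewrite mulr_ge0.
- by [].
- by move=> A; rewrite !mulr_ge0.
move=> A B _ _.
have -> : mu A * f A * (mu B * g B) = (mu A * mu B) * (f A * g B) by ring.
have -> : mu (A :|: B) * (mu (A :&: B) * f (A :&: B) * g (A :&: B))
   = (mu (A :|: B) * mu (A :&: B)) * (f (A :&: B) * g (A :&: B)) by ring.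
apply: ler_pM => //; rewrite ?mulr_ge0 //.
apply: ler_pM => //; [exact: df (subsetIl _ _) | exact: dg (subsetIr _ _)].
Qed.

Section Om.
Variables (R : realFieldType) (V : finType) (k : nat).
Local Notation Om := {ffun 'I_k -> {ffun V -> 'I_2}}.
Definition b2o (b : bool) : 'I_2 := if b then ord_max else ord0.
Definition phiO (A : {set 'I_k * V}) : Om :=
  [ffun j => [ffun v => b2o ((j, v) \in A)]].
Definition psiO (w : Om) : {set 'I_k * V} := [set p | w p.1 p.2 != ord0].
Lemma phiO_bij : bijective phiO.
Proof.
exists psiO.
  by move=> A; apply/setP => [[j v]]; rewrite inE !ffunE /b2o /=; case: ((j,v) \in A).
move=> w; apply/ffunP => j; apply/ffunP => v; rewrite !ffunE inE /=.
by case: (w j v) => [[|[|m]] Hm] //=; apply: ord_inj.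
Qed.
Definition leO (w w' : Om) := forall j v, (w j v <= w' j v)%N.

Lemma fkg_om (mu f g : Om -> R) :
  (forall w, 0 <= mu w) -> (forall w, 0 <= f w) -> (forall w, 0 <= g w) ->
  (forall w w', leO w w' -> f w' <= f w) ->
  (forall w w', leO w w' -> g w' <= g w) ->
  (forall A B : {set 'I_k * V}, mu (phiO A) * mu (phiO B)
      <= mu (phiO (A :|: B)) * mu (phiO (A :&: B))) ->
  (\sum_w mu w * f w) * (\sum_w mu w * g w)
  <= (\sum_w mu w) * (\sum_w mu w * f w * g w).
Proof.
move=> hm hf hg df dg hl.
rewrite !(reindex phiO (onW_bij _ phiO_bij)) /=.
have mono : forall A B : {set 'I_k * V}, A \subset B -> leO (phiO A) (phiO B).
  move=> A B sAB j v; rewrite !ffunE /b2o.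
  case: ifP => // /(subsetP sAB) ->; by [].
apply: (fkg_set (mu := fun A => mu (phiO A)) (f := fun A => f (phiO A))
     (g := fun A => g (phiO A))) => //.
- by move=> A B /mono /df.
- by move=> A B /mono /dg.
Qed.
End Om.
Lemma det22 (R : comNzRingType) (M : 'M[R]_2) :
  \det M = M ord0 ord0 * M ord_max ord_max - M ord0 ord_max * M ord_max ord0.
Proof.
rewrite (expand_det_row _ ord0) !big_ord_recl big_ord0 /cofactor !det_mx11 !mxE /=.
rewrite addr0 expr0 expr1 mul1r mulN1r mulrN.
have e1 : lift ord0 (0 : 'I_1) = ord_max :> 'I_2 by apply: ord_inj.
have e2 : lift ord0 (ord0 : 'I_1) = ord_max :> 'I_2 by apply: ord_inj.
have e3 : lift (ord_max : 'I_2) (0 : 'I_1) = ord0 :> 'I_2 by apply: ord_inj.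
by rewrite e1 ?e2 e3.
Qed.

Section Tree.
Variables (R : realFieldType) (V : finType) (root : V) (parent : V -> V).
Hypothesis Htree : is_rooted_tree root parent.

Lemma hex v : exists n, iter n parent v == root.
Proof. by have [_ H] := Htree; have [n Hn] := H v; exists n; apply/eqP. Qed.

Definition depth v := ex_minn (hex v).

Lemma depth_parent u : u != root -> (depth (parent u) < depth u)%N.
Proof.
move=> uR; rewrite /depth.
case: (ex_minnP (hex u)) => n /eqP Hn Hmin.
case: n Hn Hmin => [|m] Hn Hmin; first by rewrite /= in Hn; rewrite Hn eqxx in uR.
case: ex_minnP => n' _ Hmin'.
rewrite ltnS; apply: Hmin'; by rewrite -iterSr Hn.
Qed.

Definition flip (w : V) (s : {ffun V -> 'I_2}) : {ffun V -> 'I_2} :=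
  [ffun v => if v == w then rev_ord (s v) else s v].

Lemma flipK w : involutive (flip w).
Proof.
move=> s; apply/ffunP => v; rewrite !ffunE.
by case: eqP => // _; rewrite rev_ordK.
Qed.

Lemma flip_other w s v : v != w -> flip w s v = s v.
Proof. by rewrite ffunE => /negbTE ->. Qed.

Lemma flip_at w s : flip w s w = rev_ord (s w).
Proof. by rewrite ffunE eqxx. Qed.

Lemma sum_flip w (G H : {ffun V -> 'I_2} -> R) :
  (forall s, G (flip w s) = G s) -> (forall s, H s + H (flip w s) = 1) ->
  \sum_s G s * H s = (\sum_s G s) / 2.
Proof.
move=> hG hH.
have E : \sum_s G s * H s = \sum_s G s * H (flip w s).
  rewrite (reindex_inj (can_inj (flipK w))) /=.
  by apply: eq_bigr => s _; rewrite hG.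
have : (\sum_s G s * H s) * 2 = \sum_s G s.
  rewrite mulr_natr mulr2n {2}E -big_split /=.
  by apply: eq_bigr => s _; rewrite -mulrDr hH mulr1.
by move=> <-; rewrite mulfK // pnatr_eq0.
Qed.

Lemma sum2 (f : 'I_2 -> R) b : f b + f (rev_ord b) = \sum_(c < 2) f c.
Proof.
rewrite !big_ord_recl big_ord0 addr0.
case: b => [[|[|m]] Hm] //=.
  by congr (f _ + f _); apply: ord_inj.
by rewrite addrC; congr (f _ + f _); apply: ord_inj.
Qed.

Lemma markov_sum_gen (pi0 : 'I_2 -> R) (Q : V -> 'M[R]_2) :
  (forall v, v != root -> forall a, \sum_(b < 2) Q v a b = 1) ->
  forall n (A : {set V}), #|A| = n -> root \notin A ->
  \sum_(s : {ffun V -> 'I_2}) pi0 (s root) * \prod_(v in A) Q v (s (parent v)) (s v)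
  = (\sum_(s : {ffun V -> 'I_2}) pi0 (s root)) * (2^-1) ^+ n.
Proof.
move=> hQ; elim=> [|n IH] A cA rA.
  move/eqP: cA; rewrite cards_eq0 => /eqP ->.
  by rewrite expr0 mulr1; apply: eq_bigr => s _; rewrite big_set0 mulr1.
have : (0 < #|A|)%N by rewrite cA.
rewrite card_gt0 => /set0Pn [w0 w0A].
pose w := [arg max_(w > w0 in A) depth w].
have [wA wmax] : w \in A /\ forall u, u \in A -> (depth u <= depth w)%N.
  by rewrite /w; case: arg_maxnP => // x xA H; split => // u /H.
have wR : w != root by apply: contraNneq rA => <-.
have pww : parent w != w.
  by apply/eqP => E; have := depth_parent wR; rewrite E ltnn.
have cA' : #|A :\ w| = n by move: cA; rewrite (cardsD1 w A) wA add1n => -[].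
have rA' : root \notin A :\ w by rewrite inE negb_and rA orbT.
rewrite exprSr mulrA -(IH _ cA' rA').
have -> : \sum_(s : {ffun V -> 'I_2}) pi0 (s root) * \prod_(v in A) Q v (s (parent v)) (s v)
    = \sum_(s : {ffun V -> 'I_2}) (pi0 (s root) * \prod_(v in A :\ w) Q v (s (parent v)) (s v))
      * Q w (s (parent w)) (s w).
  apply: eq_bigr => s _; rewrite (bigD1 w) //= mulrCA [RHS]mulrC.
  by congr (_ * (_ * _)); apply: eq_bigl => v; rewrite !inE andbC.
rewrite (sum_flip (w := w)
   (G := fun s => pi0 (s root) * \prod_(v in A :\ w) Q v (s (parent v)) (s v))
   (H := fun s => Q w (s (parent w)) (s w))) //.
  move=> s; rewrite flip_other 1?eq_sym //; congr (_ * _).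
  apply: eq_bigr => v; rewrite !inE => /andP [vw vA].
  rewrite !flip_other //.
  apply/eqP => E; have := wmax _ vA.
  have vR : v != root by apply: contraNneq rA => <-.
  have := depth_parent vR; rewrite E => H1 H2.
  first [by rewrite leqNgt H2 in H1 | by rewrite leqNgt H1 in H2].
move=> s; rewrite flip_other // flip_at (sum2 (fun b => Q w (s (parent w)) b)).
exact: hQ.
Qed.

Lemma markov_sum (pi0 : 'I_2 -> R) (Q : V -> 'M[R]_2) :
  \sum_(c < 2) pi0 c = 1 ->
  (forall v, v != root -> forall a, \sum_(b < 2) Q v a b = 1) ->
  \sum_(s : {ffun V -> 'I_2}) pi0 (s root) * \prod_(v | v != root) Q v (s (parent v)) (s v) = 1.
Proof.
move=> hpi hQ.
have -> : \sum_(s : {ffun V -> 'I_2}) pi0 (s root) * \prod_(v | v != root) Q v (s (parent v)) (s v)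
  = \sum_(s : {ffun V -> 'I_2}) pi0 (s root) * \prod_(v in [set~ root]) Q v (s (parent v)) (s v).
  by apply: eq_bigr => s _; congr (_ * _); apply: eq_bigl => v; rewrite !inE.
rewrite (@markov_sum_gen pi0 Q hQ _ _ (erefl _)); last by rewrite !inE eqxx.
have -> : \sum_(s : {ffun V -> 'I_2}) pi0 (s root) = \sum_(s : {ffun V -> 'I_2}) 1 * pi0 (s root).
  by apply: eq_bigr => s _; rewrite mul1r.
rewrite (sum_flip (w := root)) //; last first.
  by move=> s; rewrite flip_at sum2.
rewrite sumr_const card_ffun card_ord cardsC1.
have : (0 < #|V|)%N by apply/card_gt0P; exists root.
case: #|V| => [//|m] _ /=.
have h2 : (2 : R) != 0 by rewrite pnatr_eq0.
rewrite expnS natrM natrX exprVn; field.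
by rewrite expf_neq0.
Qed.
End Tree.

Lemma sum_prod_gen (R : realFieldType) (T : finType) (L : {set T}) (a : T -> R) n :
  forall (D : {set T}), #|D| = n -> D \subset L -> forall b : T -> R,
  \sum_(S : {set T} | S \subset D) \prod_(x in L) (if x \in S then a x else b x)
  = \prod_(x in L) (if x \in D then a x + b x else b x).
Proof.
elim: n => [|n IH] D cD DL b.
  move/eqP: cD; rewrite cards_eq0 => /eqP ->.
  rewrite (big_pred1 set0); last by move=> A; rewrite subset0.
  by apply: eq_bigr => x _; rewrite !inE.
have : (0 < #|D|)%N by rewrite cD.
rewrite card_gt0 => /set0Pn [i iD].
have iL : i \in L by apply: (subsetP DL).
have cD' : #|D :\ i| = n by move: cD; rewrite (cardsD1 i D) iD add1n => -[].
rewrite (sum_subset_split _ iD).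
pose b' := fun x => if x == i then a x + b x else b x.
have -> : \prod_(x in L) (if x \in D then a x + b x else b x)
    = \prod_(x in L) (if x \in D :\ i then a x + b' x else b' x).
  apply: eq_bigr => x _; rewrite !inE /b'.
  by case: (eqVneq x i) => [->|] //=; rewrite iD.
rewrite -(IH _ cD') ?(subset_trans (subsetDl _ _) DL) //.
apply: eq_big => // S; rewrite subsetD1 => /andP [SD iS].
rewrite !(bigD1 i iL) /= /b' eqxx (negbTE iS) setU11 mulrDl [RHS]addrC; congr (_ + _).
  congr (_ * _); apply: eq_bigr => x /andP [_ xi].
  by rewrite (negbTE xi).
congr (_ * _); apply: eq_bigr => x /andP [_ xi].
by rewrite !inE (negbTE xi).
Qed.

Lemma sum_prod_subsets (R : realFieldType) (T : finType) (L : {set T}) (a b : T -> R) :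
  \sum_(S : {set T} | S \subset L) \prod_(x in L) (if x \in S then a x else b x)
  = \prod_(x in L) (a x + b x).
Proof.
rewrite (@sum_prod_gen R T L a _ L (erefl _) (subxx _) b).
by apply: eq_bigr => x ->.
Qed.

Lemma pd_identity (R : realFieldType) (V : finType) (root : V) (parent : V -> V)
  (lambda : V -> R) (L : {set V}) (q : V -> R) :
  \sum_(S : {set V} | S \subset L) surv_prob L q S * PD root parent lambda S
  = \sum_(v | v != root) lambda v * (1 - \prod_(x in L | anc parent v x) q x).
Proof.
rewrite /PD.
have -> : \sum_(S : {set V} | S \subset L) surv_prob L q S *
     \sum_(v | v != root) (if [exists x in S, anc parent v x] then lambda v else 0)
  = \sum_(S : {set V} | S \subset L) \sum_(v | v != root) surv_prob L q S *
     (if [exists x in S, anc parent v x] then lambda v else 0).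
  by apply: eq_bigr => S _; rewrite mulr_sumr.
rewrite exchange_big /=; apply: eq_bigr => v _.
have -> : \sum_(S : {set V} | S \subset L) surv_prob L q S *
     (if [exists x in S, anc parent v x] then lambda v else 0)
  = lambda v * (\sum_(S : {set V} | S \subset L) surv_prob L q S
     - \sum_(S : {set V} | S \subset L)
         \prod_(x in L) (if x \in S then (if anc parent v x then 0 else 1 - q x) else q x)).
  rewrite -sumrB mulr_sumr; apply: eq_bigr => S SL.
  case: existsP => [[x /andP [xS ax]]|nex].
    by rewrite (bigD1 x (subsetP SL x xS)) /= xS ax mul0r subr0 mulrC.
  rewrite /surv_prob; have -> : \prod_(x in L)
     (if x \in S then (if anc parent v x then 0 else 1 - q x) else q x)
     = \prod_(x in L) (if x \in S then 1 - q x else q x).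
    apply: eq_bigr => x _; case xS: (x \in S) => //.
    case ax: (anc parent v x) => //; exfalso; apply: nex; exists x.
    by rewrite xS ax.
  by rewrite subrr !mulr0.
rewrite /surv_prob !sum_prod_subsets.
congr (_ * (_ - _)).
  by apply: big1 => x _; rewrite subrK.
rewrite big_mkcondr /=; apply: eq_bigr => x _.
by case: (anc parent v x); rewrite ?add0r // subrK.
Qed.

Lemma tp2 (R : realFieldType) (M : 'M[R]_2) (a1 a2 b1 b2 : bool) :
  (forall a b, 0 <= M a b) -> 0 <= \det M ->
  M (b2o a1) (b2o a2) * M (b2o b1) (b2o b2)
  <= M (b2o (a1 || b1)) (b2o (a2 || b2)) * M (b2o (a1 && b1)) (b2o (a2 && b2)).
Proof.
move=> hM; rewrite det22 subr_ge0 => hd.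
case: a1; case: a2; case: b1; case: b2; rewrite /b2o /=;
  first [exact: lexx | by rewrite [X in _ <= X]mulrC | by rewrite [X in X <= _]mulrC | by rewrite [X in X <= _]mulrC [X in _ <= X]mulrC].
Qed.

Lemma pi_swap (R : realFieldType) (f : 'I_2 -> R) (a b : bool) :
  f (b2o a) * f (b2o b) = f (b2o (a || b)) * f (b2o (a && b)).
Proof. by case: a; case: b => //=; rewrite mulrC. Qed.

Section Main.
Variables (R : realFieldType) (V : finType) (root : V) (parent : V -> V) (k : nat)
  (pi : 'I_k -> 'I_2 -> R) (P : 'I_k -> V -> 'M[R]_2).
Local Notation Om := {ffun 'I_k -> {ffun V -> 'I_2}}.
Local Notation mu := (config_prob root parent pi P).

Hypothesis hpi : forall j s, 0 < pi j s.
Hypothesis hP : forall j (v : V), v != root ->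
     (forall a b, 0 <= P j v a b) /\ (forall a, \sum_(b < 2) P j v a b = 1).
Hypothesis hdet : forall j (v : V), v != root -> 0 <= \det (P j v).

Lemma mu_ge0 w : 0 <= mu w.
Proof.
rewrite /config_prob; apply: prodr_ge0 => j _; apply: mulr_ge0; first exact: ltW.
by apply: prodr_ge0 => v vR; exact: (hP j vR).1.
Qed.

Lemma prod_pos (w : Om) j :
  0 <= \prod_(v | v != root) P j v (w j (parent v)) (w j v).
Proof. by apply: prodr_ge0 => v vR; exact: (hP j vR).1. Qed.

Lemma mu_lattice (A B : {set 'I_k * V}) :
  mu (phiO A) * mu (phiO B) <= mu (phiO (A :|: B)) * mu (phiO (A :&: B)).
Proof.
rewrite /config_prob -!big_split /=; apply: ler_prod => j _; apply/andP; split.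
  by apply: mulr_ge0; apply: mulr_ge0; first [exact: ltW | exact: prod_pos].
rewrite mulrACA [X in _ <= X]mulrACA.
apply: ler_pM.
- by apply: mulr_ge0; exact: ltW.
- by apply: mulr_ge0; exact: prod_pos.
  by rewrite !ffunE !inE pi_swap.
rewrite -!big_split /=; apply: ler_prod => v vR; apply/andP; split.
  by rewrite mulr_ge0 ?(hP j vR).1.
rewrite !ffunE !inE.
exact: tp2 (hP j vR).1 (hdet j vR).
Qed.

Hypothesis Htree : is_rooted_tree root parent.
Hypothesis hpisum : forall j, \sum_(s < 2) pi j s = 1.

Lemma mu_sum : \sum_w mu w = 1.
Proof.
have -> : \sum_w mu w = \prod_j \sum_(s : {ffun V -> 'I_2})
     (pi j (s root) * \prod_(v | v != root) P j v (s (parent v)) (s v)).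
  by rewrite bigA_distr_bigA.
apply: big1 => j _; apply: markov_sum => //.
by move=> v vR; exact: (hP j vR).2.
Qed.

Lemma prod_ineq (Pr : pred V) (qq : V -> Om -> R) :
  (forall x, Pr x -> forall w, 0 <= qq x w) ->
  (forall x, Pr x -> forall w w', leO w w' -> qq x w' <= qq x w) ->
  forall r : seq V,
  \prod_(x <- r | Pr x) (\sum_w mu w * qq x w)
  <= \sum_w mu w * \prod_(x <- r | Pr x) qq x w.
Proof.
move=> h0 hd; elim=> [|a r IH].
  by rewrite big_nil; under eq_bigr do rewrite big_nil mulr1; rewrite mu_sum.
rewrite big_cons; under [X in _ <= X]eq_bigr do rewrite big_cons.
case Pa: (Pr a); last exact: IH.
apply: (le_trans (y := (\sum_w mu w * qq a w) * \sum_w mu w * \prod_(x <- r | Pr x) qq x w)).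
  apply: ler_wpM2l => //; apply: sumr_ge0 => w _; rewrite mulr_ge0 ?mu_ge0 ?h0 //.
have g0 : forall w, 0 <= \prod_(x <- r | Pr x) qq x w.
  by move=> w; apply: prodr_ge0 => x Px; exact: h0.
have gd : forall w w', leO w w' ->
    \prod_(x <- r | Pr x) qq x w' <= \prod_(x <- r | Pr x) qq x w.
  move=> w w' hw; apply: ler_prod => x Px; rewrite h0 //=; exact: hd.
have H := fkg_om (mu := mu) (f := qq a) (g := fun w => \prod_(x <- r | Pr x) qq x w)
  mu_ge0 (h0 a Pa) g0 (hd a Pa) gd mu_lattice.
rewrite mu_sum mul1r in H; apply: (le_trans H).
by rewrite le_eqVlt; apply/orP; left; apply/eqP; apply: eq_bigr => w _; rewrite mulrA.
Qed.

End Main.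

Lemma gfob_eq (R : realFieldType) (V : finType) (root : V) (parent : V -> V) (k : nat)
  (pi : 'I_k -> 'I_2 -> R) (P : 'I_k -> V -> 'M[R]_2)
  (p : V -> {ffun 'I_k -> 'I_2} -> R) x :
  gFOB_prob root parent pi P p x
  = \sum_w config_prob root parent pi P w * p x (state_at w x).
Proof.
rewrite /gFOB_prob /leaf_state_prob.
under eq_bigr => i _ do rewrite big_mkcond mulr_sumr.
rewrite exchange_big; apply: eq_bigr => w _ /=.
rewrite (bigD1 (state_at w x)) //= eqxx big1 ?addr0 1?mulrC //.
by move=> i /negbTE; rewrite eq_sym => ->; rewrite mulr0.
Qed.

Unset Implicit Arguments.

Theorem theorem3p1 (R : realFieldType) (V : finType) (root : V)
  (parent : V -> V) (lambda : V -> R) (k : nat)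
  (pi : 'I_k -> 'I_2 -> R) (P : 'I_k -> V -> 'M[R]_2)
  (p : V -> {ffun 'I_k -> 'I_2} -> R) :
  is_rooted_tree root parent ->
  (forall v : V, v != root -> 0 <= lambda v) ->
  (forall j s, 0 < pi j s) ->
  (forall j, \sum_(s < 2) pi j s = 1) ->
  (forall j (v : V), v != root ->
     (forall a b, 0 <= P j v a b) /\ (forall a, \sum_(b < 2) P j v a b = 1)) ->
  (forall j (v : V), v != root -> 0 <= \det (P j v)) ->
  (forall x, x \in leaves root parent -> forall i, 0 <= p x i <= 1) ->
  (forall x, x \in leaves root parent -> forall i l : {ffun 'I_k -> 'I_2},
     (forall j, (l j <= i j)%N) -> p x i <= p x l) ->
  expPD_tFOB root parent lambda pi P p <= expPD_gFOB root parent lambda pi P p.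
Proof.
move=> Htree hlam hpi hpisum hP hdet hp hmono.
rewrite /expPD_tFOB /expPD_gFOB.
under eq_bigr => w _ do rewrite pd_identity.
rewrite pd_identity.
have hsum : \sum_w config_prob root parent pi P w = 1 by exact: (mu_sum hP Htree hpisum).
have -> : \sum_w config_prob root parent pi P w *
    \sum_(v | v != root) lambda v *
      (1 - \prod_(x in leaves root parent | anc parent v x) p x (state_at w x))
  = \sum_(v | v != root) lambda v *
      (1 - \sum_w config_prob root parent pi P w *
         \prod_(x in leaves root parent | anc parent v x) p x (state_at w x)).
  under eq_bigr do rewrite mulr_sumr.
  rewrite exchange_big; apply: eq_bigr => v _ /=.
  rewrite -[X in lambda v * (X - _)]hsum -sumrB mulr_sumr.
  by apply: eq_bigr => w _; ring.
apply: ler_sum => v vR; apply: ler_wpM2l; first exact: hlam.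
rewrite lerD2l lerN2.
under eq_bigr do rewrite gfob_eq.
apply: (prod_ineq hpi hP hdet Htree hpisum
   (Pr := fun x => (x \in leaves root parent) && anc parent v x)
   (qq := fun x w => p x (state_at w x))).
- by move=> x /andP [xL _] w; have /andP [] := hp x xL (state_at w x).
- move=> x /andP [xL _] w w' hw; apply: hmono => // j.
  by rewrite !ffunE; exact: hw.
Qed.
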